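(* Assume the stream is in random order. Then with probability at least $\frac{1}{k!}$ the output $S$ of Algorithm 5 satisfies $|S|=k$.
   Context: $V$ is a finite ground set with $|V|=n$; $f:2^V\to\mathbb{R}_{\ge0}$ is monotone, submodular and normalized; $f(e\mid Y)=f(Y\cup\{e\})-f(Y)$. $k\le n$ is a positive integer and $\mathrm{OPT}=\max\{f(S):S\subseteq V,|S|\le k\}$. A stream is an ordering $e_1,\dots,e_n$ of $V$; ''random order'' means a uniformly random permutation. Algorithm 5 (knows $\mathrm{OPT}$): start with $S=\emptyset$; for $i=1,\dots,n$, add $e_i$ to $S$ if $|S|<k$ and $f(e_i\mid S)\ge\frac{\mathrm{OPT}-f(S)}{k}$; return $S$. *)

(* Defs.v *)
From HB Require Import structures.
From mathcomp Require Import all_boot all_order all_algebra all_fingroup.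
Set Implicit Arguments. Unset Strict Implicit. Unset Printing Implicit Defensive.
Import Order.TTheory GRing.Theory Num.Theory.
Local Open Scope ring_scope.

Section Defs.
Variables (R : realFieldType) (V : finType).

Definition monotone_set_fun (f : {set V} -> R) : Prop :=
  forall A B : {set V}, A \subset B -> f A <= f B.

Definition submodular (f : {set V} -> R) : Prop :=
  forall A B : {set V}, f (A :|: B) + f (A :&: B) <= f A + f B.

Definition normalized (f : {set V} -> R) : Prop := f set0 = 0.

Definition nonneg_set_fun (f : {set V} -> R) : Prop := forall A, 0 <= f A.

(* OPT = max { f S : |S| <= k }  (f is nonnegative, so 0 is a safe unit) *)
Definition OPT (f : {set V} -> R) (k : nat) : R :=
  \big[Num.max/0]_(S : {set V} | (#|S| <= k)%N) f S.

Definition marg (f : {set V} -> R) (e : V) (Y : {set V}) : R :=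
  f (e |: Y) - f Y.

Definition alg5_step (f : {set V} -> R) (k : nat) (opt : R)
  (S : {set V}) (e : V) : {set V} :=
  if (#|S| < k)%N && ((opt - f S) / k%:R <= marg f e S) then e |: S else S.

Definition alg5 (f : {set V} -> R) (k : nat) (stream : seq V) : {set V} :=
  foldl (alg5_step f k (OPT f k)) set0 stream.

(* The stream induced by a permutation s: e_i = s (i-th element of enum V).
   A uniformly random permutation s gives a uniformly random ordering. *)
Definition perm_stream (s : {perm V}) : seq V := [seq s x | x <- enum V].

Definition prob_full (f : {set V} -> R) (k : nat) : R :=
  #|[set s : {perm V} | #|alg5 f k (perm_stream s)| == k]|%:R
    / #|{perm V}|%:R.

End Defs.

(* Main.v *)
Require Import Defs.
From HB Require Import structures.
From mathcomp Require Import all_boot all_order all_algebra all_fingroup.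
From mathcomp Require Import zify ring lra.
Import Order.TTheory GRing.Theory Num.Theory.
Local Open Scope ring_scope.
Set Implicit Arguments. Unset Strict Implicit.

Lemma perm_on_sub (T : finType) (A B : {set T}) (s : {perm T}) :
  A \subset B -> perm_on A s -> perm_on B s.
Proof. by rewrite /perm_on => AB H; apply: subset_trans H AB. Qed.

Section Proof.
Variables (R : realFieldType) (V : finType) (f : {set V} -> R) (k : nat).
Hypotheses (Hnonneg : nonneg_set_fun f) (Hmono : monotone_set_fun f)
  (Hsub : submodular f) (Hk0 : (0 < k)%N).

Local Notation step := (alg5_step f k (OPT f k)).

Lemma fold_full (l : seq V) (S : {set V}) : (k <= #|S|)%N -> foldl step S l = S.
Proof.
elim: l S => [//|x l IH] S HS /=.
by rewrite IH // /alg5_step ltnNge HS.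
Qed.

Lemma marg_ge0 (e : V) (S : {set V}) : 0 <= marg f e S.
Proof. by rewrite /marg subr_ge0; apply: Hmono; apply: subsetUr. Qed.

Lemma marg_mono (x : V) (S T : {set V}) : S \subset T -> f (x |: T) - f T <= marg f x S.
Proof.
move=> ST.
have H := Hsub (x |: S) T.
have E1 : (x |: S) :|: T = x |: T.
  apply/setP=> y; rewrite !inE; case yT: (y \in T); rewrite ?orbT //= orbF.
  by case yS: (y \in S) => //; move: (subsetP ST y yS); rewrite yT.
have E2 : f S <= f ((x |: S) :&: T).
  by apply: Hmono; apply/subsetP=> y yS; rewrite !inE yS (subsetP ST) ?orbT.
rewrite E1 in H; rewrite /marg; lra.
Qed.

Lemma sum_strict (t : R) (n : nat) : forall S Rs : {set V}, #|Rs| = n.+1 ->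
  (forall o, o \in Rs -> marg f o S < t) -> f (S :|: Rs) < f S + n.+1%:R * t.
Proof.
elim: n => [|n IH] S Rs HR Hlt.
  have [x Ex] := cards1P (introT eqP HR).
  have := Hlt x; rewrite Ex set11 /marg => /(_ isT).
  rewrite setUC; rewrite mul1r; lra.
have [x xR] : exists x, x \in Rs.
  by apply/set0Pn; rewrite -card_gt0 HR.
have HR' : #|Rs :\ x| = n.+1 by move: HR; rewrite (cardsD1 x) xR => -[].
have := IH S (Rs :\ x) HR' (fun o oR => Hlt o (subsetP (subD1set Rs x) o oR)).
have Ex : S :|: Rs = x |: (S :|: Rs :\ x).
  apply/setP=> y; rewrite !inE; case: (eqVneq y x) => [->|]; rewrite ?xR ?orbT //.
have Hm := marg_mono x (subsetUl S (Rs :\ x)).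
have Hx := Hlt x xR.
rewrite Ex -(@natr1 R n.+1) mulrDl mul1r.
lra.
Qed.

Lemma avg (x : V) (S Rs : {set V}) : x \in Rs -> (#|Rs| <= k)%N ->
  OPT f k <= f (S :|: Rs) ->
  exists2 o, o \in Rs & (OPT f k - f S) / k%:R <= marg f o S.
Proof.
move=> xR HRk Hopt.
set t := (OPT f k - f S) / k%:R.
have [tle0|tgt0] := lerP t 0.
  by exists x => //; apply: le_trans tle0 (marg_ge0 _ _).
case: (boolP [exists o in Rs, t <= marg f o S]).
  by move=> /exists_inP [o oR Ho]; exists o.
move=> /exists_inPn Hn.
have Hlt : forall o, o \in Rs -> marg f o S < t by move=> o /Hn; rewrite -ltNge.
have Hc : #|Rs| = (#|Rs|.-1).+1.
  by rewrite prednK // card_gt0; apply/set0Pn; exists x.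
have H1 := sum_strict Hc Hlt.
rewrite -Hc in H1.
have kt : k%:R * t = OPT f k - f S.
  rewrite /t mulrC -mulrA mulVf ?mulr1 //.
  by rewrite pnatr_eq0 -lt0n.
have H2 : #|Rs|%:R * t <= k%:R * t.
  by apply: ler_wpM2r; [exact: ltW | rewrite ler_nat].
exfalso; lra.
Qed.

Lemma key_n (n : nat) : forall (l : seq V), size l = n -> forall (S Rs : {set V}),
  {subset Rs <= l} -> (#|S| <= k)%N -> (#|Rs| <= k)%N ->
  (k <= #|S| + #|Rs|)%N -> [disjoint S & Rs] -> OPT f k <= f (S :|: Rs) ->
  exists t : {perm V}, perm_on Rs t /\ #|foldl step S (map t l)| = k.
Proof.
elim: n => [|n IH] [|x l] //= Hsz S Rs HRl HS HR HSR Hdis Hopt.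
  have R0 : #|Rs| = 0%N.
    apply: eq_card0 => y; apply/idP => /HRl; by rewrite in_nil.
  exists 1%g; split; first exact: perm_on1.
  by rewrite /=; apply/eqP; rewrite eqn_leq HS; rewrite R0 addn0 in HSR.
have [kS|Sk] := leqP k #|S|.
  exists 1%g; split; first exact: perm_on1.
  have := fold_full (map (1%g : {perm V}) (x :: l)) kS; rewrite /= => ->.
  by apply/eqP; rewrite eqn_leq HS.
case xR: (x \in Rs).
  have [o oR Ho] := avg xR HR Hopt.
  have oS : o \notin S by rewrite (disjointFl Hdis oR).
  have h1 : {subset Rs :\ o <= map (tperm x o) l}.
    move=> y; rewrite !inE => /andP [yo yR].
    case: (eqVneq y x) => [Eyx|yx].
      subst y.
      have ox : o != x by rewrite eq_sym.
      have := HRl o oR.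
      rewrite inE (negbTE ox) /= => ol.
      by rewrite -{1}(tpermR x o); apply: map_f.
    have := HRl y yR.
    rewrite inE (negbTE yx) /= => yl.
    by rewrite -(@tpermD _ x o y) 1?eq_sym //; apply: map_f.
  have h2 : (#|o |: S| <= k)%N by rewrite cardsU1 oS.
  have h3 : (#|Rs :\ o| <= k)%N by apply: leq_trans (subset_leq_card (subD1set _ _)) HR.
  have h4 : (k <= #|o |: S| + #|Rs :\ o|)%N by move: HSR; rewrite cardsU1 oS (cardsD1 o Rs) oR; lia.
  have h5 : [disjoint o |: S & Rs :\ o].
    rewrite disjoints_subset; apply/subsetP=> y; rewrite !inE.
    case/orP=> [/eqP->|yS]; first by rewrite eqxx.
    rewrite andbC; apply/negP=> /andP [yR _].
    by move: Hdis; rewrite disjoints_subset => /subsetP /(_ y yS); rewrite inE yR.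
  have h6 : OPT f k <= f ((o |: S) :|: (Rs :\ o)).
    suff -> : (o |: S) :|: (Rs :\ o) = S :|: Rs by [].
    apply/setP=> y; rewrite !inE; case: (eqVneq y o) => [->|yo] /=.
      by rewrite oR !orbT.
    by [].
  have [t [Ht Hf]] := IH _ (etrans (size_map _ _) (eq_add_S _ _ Hsz)) _ _ h1 h2 h3 h4 h5 h6.
  exists (tperm x o * t)%g; split.
    apply: perm_onM.
      apply: perm_on_sub (tperm_on x o); apply/subsetP=> y; rewrite !inE.
      by case/orP=> /eqP->.
    by apply: perm_on_sub Ht; apply: subD1set.
  rewrite /= permM tpermL (out_perm Ht) ?inE ?eqxx //.
  have -> : step S o = o |: S by rewrite /alg5_step Sk Ho.
  suff -> : map (tperm x o * t)%g l = map t (map (tperm x o) l) by [].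
  by rewrite -map_comp; apply: eq_map => y; rewrite /= permM.
have h1 : {subset Rs <= l}.
  move=> y yR; have := HRl y yR; rewrite inE; case/orP=> // /eqP Ey.
  by move: xR; rewrite -Ey yR.
have h2 : (#|step S x| <= k)%N.
  rewrite /alg5_step; case: ifP => // /andP [H _].
  by rewrite cardsU1; case: (x \in S).
have h4 : (k <= #|step S x| + #|Rs|)%N.
  apply: leq_trans HSR _; rewrite leq_add2r; apply: subset_leq_card.
  by rewrite /alg5_step; case: ifP => // _; apply: subsetUr.
have h5 : [disjoint step S x & Rs].
  rewrite /alg5_step; case: ifP => // _.
  rewrite disjoint_sym disjoints_subset; apply/subsetP=> y yR; rewrite !inE.
  apply/negP=> /orP [/eqP Ey|yS]; first by move: xR; rewrite -Ey yR.
  by move: Hdis; rewrite disjoints_subset => /subsetP /(_ y yS); rewrite inE yR.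
have h6 : OPT f k <= f (step S x :|: Rs).
  apply: le_trans Hopt _; apply: Hmono; apply: setSU.
  by rewrite /alg5_step; case: ifP => // _; apply: subsetUr.
have [t [Ht Hf]] := IH _ (eq_add_S _ _ Hsz) _ _ h1 h2 HR h4 h5 h6.
exists t; split => //.
by rewrite /= (out_perm Ht) ?xR.
Qed.


Lemma opt_attained : exists2 S0 : {set V}, (#|S0| <= k)%N & OPT f k <= f S0.
Proof.
have P0 : [pred S : {set V} | (#|S| <= k)%N] set0 by rewrite inE cards0.
case: (@arg_maxP _ R {set V} set0 [pred S : {set V} | (#|S| <= k)%N] f P0)
  => S0 HS0 Hmax.
exists S0; first by move: HS0; rewrite inE.
rewrite /OPT; apply: bigmax_le; first exact: Hnonneg.
by move=> S HS; apply: Hmax; rewrite inE.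
Qed.

End Proof.

Lemma pad (V : finType) (d : nat) : forall S0 : {set V}, (#|S0| + d <= #|V|)%N ->
  exists O : {set V}, S0 \subset O /\ #|O| = (#|S0| + d)%N.
Proof.
elim: d => [|d IH] S0 H; first by exists S0; rewrite addn0.
have [x xS] : exists x, x \notin S0.
  apply/existsP; rewrite -negb_forall; apply/negP => /forallP Hall.
  have : S0 = setT by apply/setP => y; rewrite inE Hall.
  by move=> E; move: H; rewrite E cardsT; lia.
have := IH (x |: S0); rewrite cardsU1 xS => /(_ ltac:(lia)) [O [HO HcO]].
exists O; split; last by rewrite HcO; lia.
by apply: subset_trans HO; apply: subsetUr.
Qed.

Unset Implicit Arguments.
Set Strict Implicit.

Theorem mainTheorem13 (R : realFieldType) (V : finType) (f : {set V} -> R)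
  (k : nat)
  (Hnonneg : nonneg_set_fun f) (Hmono : monotone_set_fun f)
  (Hsub : submodular f) (Hnorm : normalized f)
  (Hk0 : (0 < k)%N) (Hkn : (k <= #|V|)%N) :
  (k`!%:R)^-1 <= prob_full f k.
Proof.
have [S0 HS0 HoS0] := @opt_attained R V f k Hnonneg.
have [O [SO HO]] : exists O : {set V}, S0 \subset O /\ #|O| = k.
  have := @pad V (k - #|S0|) S0; rewrite subnKC // => /(_ Hkn) [O [H1 H2]].
  by exists O.
have Hopt : OPT f k <= f O by apply: le_trans HoS0 (Hmono _ _ SO).
set good := [set s : {perm V} | #|alg5 f k (perm_stream s)| == k].
have Hex : forall s : {perm V}, exists t : {perm V}, perm_on O t /\ (s * t)%g \in good.
  move=> s.
  have h1 : {subset O <= perm_stream s}.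
    move=> y _; rewrite /perm_stream -(permKV s y); apply: map_f.
    by rewrite mem_enum.
  have h2 : (#|(set0 : {set V})| <= k)%N by rewrite cards0.
  have h3 : (#|O| <= k)%N by rewrite HO.
  have h4 : (k <= #|(set0 : {set V})| + #|O|)%N by rewrite cards0 HO.
  have h5 : [disjoint (set0 : {set V}) & O] by rewrite disjoints_subset sub0set.
  have h6 : OPT f k <= f (set0 :|: O) by rewrite set0U.
  have [t [Ht Hf]] := key_n Hmono Hsub Hk0 (erefl _) h1 h2 h3 h4 h5 h6.
  exists t; split => //.
  rewrite inE /alg5.
  have -> : perm_stream (s * t)%g = map t (perm_stream s).
    by rewrite /perm_stream -map_comp; apply: eq_map => y; rewrite /= permM.
  by rewrite Hf.
have Hsubs : [set: {perm V}] \subset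
    [set (g * t)%g | g in good, t in [set t : {perm V} | perm_on O t]].
  apply/subsetP => s _.
  have [t [Ht Hg]] := Hex s.
  apply/imset2P; exists (s * t)%g t^-1%g => //.
    by rewrite inE; apply: perm_onV.
  by rewrite -mulgA mulgV mulg1.
have Hcard : (#|{perm V}| <= #|good| * k`!)%N.
  rewrite -cardsT; apply: leq_trans (subset_leq_card Hsubs) _.
  rewrite curry_imset2X; apply: leq_trans (leq_imset_card _ _) _.
  by rewrite cardsX [#|[set t | perm_on O t]|]cardsE card_perm HO.
rewrite /prob_full -/good.
have Np : (0 < #|{perm V}|)%N by apply/card_gt0P; exists 1%g.
have Fp : (0 < k`!)%N by apply: fact_gt0.
rewrite ler_pdivlMr ?ltr0n // -[X in _ <= X]mul1r.
rewrite -[X in _ <= X * _](@mulVf _ (k`!%:R)) ?pnatr_eq0 -?lt0n //.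
rewrite -mulrA; apply: ler_wpM2l; first by rewrite invr_ge0 ler0n.
by rewrite -natrM ler_nat mulnC.
Qed.
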